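(* Let $Y=\langle X,\beta^*\rangle=\sum_{j=1}^pX_j\beta^*_j$ where $X\in\mathbb{Z}^p$ and $\beta^*\in\mathbb{R}^p$ with $\beta^*_j\in\mathcal{S}=\{a_1,\dots,a_{\mathcal{R}}\}$ for every $j$, where $\mathcal{S}$ is rationally independent. Let $t=(t_0,t_1,\dots,t_{\mathcal{R}})$ be an integer relation for the vector $(Y,a_1,\dots,a_{\mathcal{R}})$. Then $t\in H$, where $$H=\{k(-1,\theta_1^*,\dots,\theta^*_{\mathcal{R}}):k\in\mathbb{Z}\setminus\{0\}\},\qquad \theta^*_i=\sum_{j:\beta^*_j=a_i}X_j.$$
   Context: A finite set of reals is rationally independent if the only rational linear combination of its elements equal to $0$ is the trivial one. An integer relation for $b\in\mathbb{R}^k$ is a nonzero $m\in\mathbb{Z}^k$ with $\langle b,m\rangle=0$. *)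

(* Defs.v *)
From HB Require Import structures.
From mathcomp Require Import all_boot all_order all_algebra.
From mathcomp Require Import reals.
Set Implicit Arguments. Unset Strict Implicit. Unset Printing Implicit Defensive.
Import Order.TTheory GRing.Theory Num.Theory.
Local Open Scope ring_scope.

Definition rat_indep (R : realType) (n : nat) (a : 'I_n -> R) : Prop :=
  forall q : 'I_n -> rat, \sum_(i < n) ratr (q i) * a i = 0 -> forall i, q i = 0.

Definition int_relation (R : realType) (k : nat) (b : 'I_k -> R) (m : 'I_k -> int)
  : Prop :=
  (exists i, m i != 0) /\ \sum_(i < k) b i * (m i)%:~R = 0.

Definition cons_vec (T : Type) (n : nat) (x : T) (f : 'I_n -> T) : 'I_n.+1 -> T :=
  fun i => match unlift ord0 i with None => x | Some i' => f i' end.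

Definition Yval (R : realType) (p : nat) (X : 'I_p -> int) (beta : 'I_p -> R) : R :=
  \sum_(j < p) (X j)%:~R * beta j.

Definition theta (R : realType) (p r : nat) (X : 'I_p -> int) (beta : 'I_p -> R)
  (a : 'I_r -> R) (i : 'I_r) : int :=
  \sum_(j < p | beta j == a i) X j.

(* Main.v *)
Require Import Defs.
From HB Require Import structures.
From mathcomp Require Import all_boot all_order all_algebra.
From mathcomp Require Import reals.
From Stdlib Require Import FunctionalExtensionality.
From mathcomp Require Import ring.
Import Order.TTheory GRing.Theory Num.Theory.
Local Open Scope ring_scope.

Theorem lemma3 (R : realType) (p r : nat) (a : 'I_r -> R)
  (X : 'I_p -> int) (beta : 'I_p -> R)
  (hS : rat_indep a)
  (hbeta : forall j : 'I_p, exists i : 'I_r, beta j = a i)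
  (t : 'I_r.+1 -> int)
  (ht : int_relation (cons_vec (Yval X beta) a) t) :
  exists k : int, k != 0 /\
    t = (fun i => k * cons_vec (-1) (theta X beta a) i).
Proof.
have ainj : injective a.
  move=> i1 i2 e; apply/eqP; apply/negPn/negP => ne.
  pose q := (fun i => ((i == i1)%:R - (i == i2)%:R : rat)).
  suff : q i1 = 0.
    by rewrite /q /= eqxx (negbTE ne) subr0 => /eqP; rewrite oner_eq0.
  apply: (hS q); rewrite /q.
  under eq_bigr => i _ do rewrite rmorphB /= !rmorph_nat mulrBl.
  have H1 : forall k, \sum_i ((i == k)%:R * a i) = a k.
    move=> k; rewrite (bigD1 k) //= eqxx mul1r big1 ?addr0 // => i /negbTE ->.
    by rewrite mul0r.
  by rewrite big_split /= sumrN H1 H1 e subrr.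
have hY : Yval X beta = \sum_(i < r) (theta X beta a i)%:~R * a i.
  rewrite /Yval /theta.
  symmetry.
  rewrite (eq_bigr (fun i => \sum_(j < p | beta j == a i) (X j)%:~R * a i)); last first.
    by move=> i _; rewrite rmorph_sum /= mulr_suml.
  rewrite (exchange_big_dep xpredT) //=; apply: eq_bigr => j _.
  have [i0 hi0] := hbeta j.
  rewrite (eq_bigl (pred1 i0)); last first.
    by move=> i /=; rewrite hi0; apply/eqP/eqP => [/ainj|->].
  by rewrite big_pred1_eq hi0.
case: ht => [[i0 hi0] hsum].
rewrite big_ord_recl in hsum.
have E : \sum_(i < r) cons_vec (Yval X beta) a (lift ord0 i) * (t (lift ord0 i))%:~R = \sum_(i < r) a i * (t (lift ord0 i))%:~R.
  by apply: eq_bigr => i _; rewrite /cons_vec liftK.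
rewrite E /cons_vec unlift_none hY in hsum.
have hq : forall i, t (lift ord0 i) = - t ord0 * theta X beta a i.
  move=> i.
  have := hS (fun i => ((t ord0 * theta X beta a i + t (lift ord0 i))%:Q)) _ i.
  move=> H; apply/eqP; rewrite mulNr -subr_eq0 opprK addrC.
  rewrite -(intr_eq0 rat); apply/eqP; apply: H.
  apply: (etrans _ hsum); rewrite mulr_suml -big_split /=; apply: eq_bigr => k _.
  by rewrite ratr_int rmorphD rmorphM /=; ring.
have t0 : t ord0 != 0.
  apply: contraNneq hi0 => e.
  case: (unliftP ord0 i0) => [j ->|->]; last by rewrite e.
  by rewrite hq e oppr0 mul0r.
exists (-(t ord0)); split; first by rewrite oppr_eq0.
apply: functional_extensionality => i.
rewrite /cons_vec; case: (unliftP ord0 i) => [j ->|->].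
  by rewrite hq.
by rewrite mulrN1 opprK.
Qed.
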